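(* Let $T_0<T_f<T_i$. Let $\xi=\xi_{T_0}$ be the coefficient of the Neumann solution of problem (P1) with datum $T_0$. Then $$\operatorname{erf}\Big(\xi\sqrt{\tfrac{\alpha_\ell}{\alpha_s}}\Big)<\frac{k_s}{k_\ell}\sqrt{\frac{\alpha_\ell}{\alpha_s}}\;\frac{T_f-T_0}{T_i-T_f}.$$
   Context: Physical constants: density $\rho>0$, specific heats $c_s,c_\ell>0$, thermal conductivities $k_s,k_\ell>0$, latent heat $\ell>0$. Diffusivities are $\alpha_s=k_s/(\rho c_s)$ and $\alpha_\ell=k_\ell/(\rho c_\ell)$, and $b=\alpha_\ell/\alpha_s$. The error functions are $\operatorname{erf}(x)=\frac2{\sqrt\pi}\int_0^xe^{-u^2}du$ and $\operatorname{erfc}=1-\operatorname{erf}$. Set $F_1(x)=e^{-x^2}/\operatorname{erfc}(x)$ and $F_2(x)=e^{-x^2}/\operatorname{erf}(x)$. Problem (P1): find $s(t)$ and temperatures $T_s$ (on $0<x<s(t)$) and $T_\ell$ (on $x>s(t)$) such that: - $\rho c_sT_{s,t}=k_sT_{s,xx}$ and $\rho c_\ell T_{\ell,t}=k_\ell T_{\ell,xx}$; - $s(0)=0$; - $T_\ell(x,0)=T_\ell(+\infty,t)=T_i>T_f$; - $T_s(s(t),t)=T_\ell(s(t),t)=T_f$; - $k_sT_{s,x}(s(t),t)-k_\ell T_{\ell,x}(s(t),t)=\rho\ell\dot s(t)$; - $T_s(0,t)=T_0<T_f$. Its Neumann solution has free boundary $s(t)=2\xi\sqrt{\alpha_\ell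 t}$. Here $\xi>0$ is the unique positive solution of $G(x)=x$, where $G(x)=b_4F_2(\sqrt bx)-b_3F_1(x)$, $b_3=\frac{c_\ell(T_i-T_f)}{\ell\sqrt\pi}$ and $b_4=\frac{k_s(T_f-T_0)}{\rho\ell\sqrt{\pi\alpha_s\alpha_\ell}}$. *)

(* Defs.v *)
From Stdlib Require Import Reals Lra.
Open Scope R_scope.

Definition gauss (u : R) : R := exp (- u ^ 2).

Lemma gauss_continuity : continuity gauss.
Proof.
  unfold gauss. apply continuity_comp with (f1 := fun u => - u ^ 2).
  - apply continuity_opp. apply derivable_continuous. apply derivable_pow.
  - exact (derivable_continuous exp derivable_exp).
Qed.

Lemma gauss_integrable (a b : R) : Riemann_integrable gauss a b.
Proof.
  destruct (Rle_dec a b) as [H|H].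
  - apply continuity_implies_RiemannInt; [exact H|]. intros; apply gauss_continuity.
  - apply RiemannInt_P1. apply continuity_implies_RiemannInt; [lra|].
    intros; apply gauss_continuity.
Qed.

Definition erf (x : R) : R := 2 / sqrt PI * RiemannInt (gauss_integrable 0 x).
Definition erfc (x : R) : R := 1 - erf x.

Definition F1 (x : R) : R := exp (- x ^ 2) / erfc x.
Definition F2 (x : R) : R := exp (- x ^ 2) / erf x.

Definition alpha_s (rho c_s k_s : R) : R := k_s / (rho * c_s).
Definition alpha_l (rho c_l k_l : R) : R := k_l / (rho * c_l).

Definition Gfun (rho c_s c_l k_s k_l l T0 Tf Ti : R) (x : R) : R :=
  let a_s := alpha_s rho c_s k_s in
  let a_l := alpha_l rho c_l k_l in
  let b := a_l / a_s in
  let b3 := c_l * (Ti - Tf) / (l * sqrt PI) in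
  let b4 := k_s * (Tf - T0) / (rho * l * sqrt (PI * a_s * a_l)) in
  b4 * F2 (sqrt b * x) - b3 * F1 x.

(* Main.v *)
Require Import Defs.
From Stdlib Require Import Reals Lra.
From Coquelicot Require Import Coquelicot.
Definition J (x : R) : R := RiemannInt (gauss_integrable 0 x).
Lemma gauss_cont x : continuous gauss x.
Proof. apply continuity_pt_filterlim. apply gauss_continuity. Qed.
Lemma J_RInt x : J x = RInt gauss 0 x.
Proof. unfold J. symmetry. apply RInt_Reals. Qed.
Lemma ex_RInt_gauss a b : ex_RInt gauss a b.
Proof. apply (@ex_RInt_continuous R_CompleteNormedModule). intros; apply gauss_cont. Qed.
Lemma J_deriv x : derivable_pt_lim J x (gauss x).
Proof.
apply is_derive_Reals.
apply is_derive_ext with (fun y => RInt gauss 0 y).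
{ intros; symmetry; apply J_RInt. }
apply (is_derive_RInt _ _ 0).
- apply filter_forall. intros y. apply RInt_correct, ex_RInt_gauss.
- apply gauss_cont.
Qed.
Lemma J_cont x : continuity_pt J x.
Proof. apply derivable_continuous_pt. exists (gauss x). apply J_deriv. Qed.

Set Warnings "-notation-overridden,-ambiguous-paths,-notation-incompatible-prefix".
From HB Require Import structures.
From mathcomp Require all_boot all_order all_algebra all_classical all_reals all_analysis Rstruct Rstruct_topology.
Module MC.
Import all_boot all_order all_algebra all_classical all_reals all_analysis Rstruct Rstruct_topology.
Import Order.TTheory GRing.Theory Num.Theory numFieldNormedType.Exports.
Local Open Scope classical_set_scope.
Local Open Scope ring_scope.
Lemma dpl_cvg (f : R^o -> R^o) (x l : R^o) : derivable_pt_lim f x l ->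
  (fun h : R^o => h^-1 *: ((f \o shift x) (h *: 1) - f x)) @ (0:R^o)^' --> l.
Proof.
move=> H.
apply/cvgrPdist_lt => e /RltP e0.
have [d Hd] := H e e0.
apply/nbhs_ballP. exists (pos d); first by apply/RltP; apply: cond_pos.
move=> t /= Hb Ht.
move: Hb; rewrite /ball /= sub0r normrN -RabsE => /RltP Hb.
have Ht0 : t <> 0%coqR by move=> E; move: Ht; rewrite E eqxx.
have := Hd t Ht0 Hb.
rewrite RabsE => /RltP.
rewrite distrC; congr (`|_ - _| < _)%R.
rewrite RdivE /GRing.scale /= mulrC; congr (_ * _); congr (f _ - _).
by rewrite addrC /GRing.scale /= mulr1.
Qed.

Lemma dpl_is_derive (f : R^o -> R^o) (x l : R^o) : derivable_pt_lim f x l ->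
  is_derive x 1 f l.
Proof.
move=> H; have C := @dpl_cvg f x l H.
split; first by apply/cvg_ex; exists l.
by rewrite /derive; apply: cvg_lim.
Qed.
Lemma atanE (y : R) : Ratan.atan y = atan y.
Proof.
pose g := fun z : R^o => (Ratan.atan z - atan z : R^o).
suff : g y = g 0 by rewrite /g Ratan.atan_0 atan0 subrr => /eqP; rewrite subr_eq0 => /eqP.
apply: is_derive_0_is_cst => z.
have H1 := @dpl_is_derive Ratan.atan z _ (Ratan.derivable_pt_lim_atan z).
have H2 : is_derive (z : R^o) 1 (atan : R^o -> R^o) (1 + z ^+ 2)^-1.
  by apply: DeriveDef; [exact: derivable_atan | rewrite -derive1E derive1_atan].
have := is_deriveB H1 H2.
by rewrite RinvE RplusE RpowE subrr.
Qed.

Lemma PIE : PI = pi.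
Proof.
have E : (PI / 4)%coqR = pi / 4%:R by rewrite -atan1 -atanE Ratan.atan_1.
have -> : PI = (4 * (PI / 4))%coqR by field.
rewrite E RmultE.
have -> : (4%coqR : R) = 4%:R by rewrite -INRE; simpl; lra.
by rewrite mulrC divfK // pnatr_eq0.
Qed.

Lemma J_is_derive (x : R^o) : is_derive x 1 (J : R^o -> R^o) (gauss x).
Proof. exact: (@dpl_is_derive J x _ (J_deriv x)). Qed.

Lemma gaussE (x : R) : gauss x = gauss_fun x.
Proof. by rewrite /gauss /gauss_fun RexpE RoppE RpowE. Qed.

Lemma integral0_J (x : R) : 0 < x -> gauss_integral_proof.integral0_gauss x = J x.
Proof.
move=> x0.
rewrite /gauss_integral_proof.integral0_gauss /Rintegral.
rewrite (@continuous_FTC2 R gauss_fun (J : R -> R^o) 0 x x0).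
- have -> : J 0 = 0%R by rewrite /J RiemannInt_P9.
  by rewrite -EFinB subr0.
- by apply: continuous_subspaceT; exact: continuous_gauss_fun.
- split.
  + by move=> y _; case: (J_is_derive y).
  + apply: cvg_at_right_filter; apply/continuity_pt_cvg; exact: J_cont.
  + apply: cvg_at_left_filter; apply/continuity_pt_cvg; exact: J_cont.
- by move=> y _; rewrite derive1E (@derive_val _ _ _ _ _ _ _ (J_is_derive y)) gaussE.
Qed.

Lemma Jsq_lim (e : R) : 0 < e -> exists M : R, forall y : R, M < y -> `|pi / 4 - J y ^+ 2| < e.
Proof.
move=> e0.
have := @gauss_integral_proof.cvg_integral0_gauss_sqr R.
move/cvgrPdist_lt => /(_ _ e0) [M [_ HM]].
exists (Num.max M 0) => y; rewrite gt_max => /andP[My y0].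
by rewrite -integral0_J //; apply: HM.
Qed.

Lemma Jsq_lim' (e : R) : (0 < e)%coqR -> exists M : R, forall y : R, (M < y)%coqR ->
  (Rabs (J y ^ 2 - PI / 4) < e)%coqR.
Proof.
move=> /RltP e0; have [M HM] := @Jsq_lim e e0.
exists M => y /RltP My; apply/RltP.
have F4 : (4%coqR : R) = 4%:R by rewrite -INRE; simpl; lra.
by rewrite RabsE distrC RpowE RdivE PIE F4; apply: HM.
Qed.
End MC.
Lemma gauss_pos u : 0 < gauss u.
Proof. unfold gauss; apply exp_pos. Qed.

Lemma ex_RInt_gauss_scal c a b : ex_RInt (fun t => c * gauss t) a b.
Proof.
apply (@ex_RInt_continuous R_CompleteNormedModule). intros.
apply (continuous_mult (fun _ => c) gauss). apply continuous_const. apply gauss_cont.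
Qed.

Lemma J_diff a b : J b - J a = RInt gauss a b.
Proof.
rewrite !J_RInt. rewrite <- (RInt_Chasles gauss 0 a b) by apply ex_RInt_gauss.
unfold plus; simpl. ring.
Qed.

Lemma RInt_gauss_ge0 a b : a <= b -> 0 <= RInt gauss a b.
Proof.
intros. apply RInt_ge_0; auto. apply ex_RInt_gauss. intros; left; apply gauss_pos.
Qed.

Lemma RInt_gauss_gt0 a b : a < b -> 0 < RInt gauss a b.
Proof.
intros. apply RInt_gt_0; auto. intros; apply gauss_pos. intros; apply gauss_cont.
Qed.

Lemma J0 : J 0 = 0.
Proof. rewrite J_RInt. apply (RInt_point (V:=R_CompleteNormedModule)). Qed.

Lemma J_mono a b : a <= b -> J a <= J b.
Proof. intros. generalize (J_diff a b) (RInt_gauss_ge0 a b H). lra. Qed.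

Lemma J_ge0 a : 0 <= a -> 0 <= J a.
Proof. intros. rewrite <- J0. apply J_mono; auto. Qed.

Lemma exp_le' a b : a <= b -> exp a <= exp b.
Proof. intros [H|H]; [left; apply exp_increasing; auto | right; subst; auto]. Qed.

Lemma J_tail x y : 0 <= x -> x <= y -> J y - J x <= exp (- x ^ 2) * J (y - x).
Proof.
intros Hx Hxy. rewrite J_diff.
assert (E := RInt_comp_lin (V:=R_CompleteNormedModule) gauss 1 x 0 (y - x) (ex_RInt_gauss _ _)).
replace (1 * 0 + x) with x in E by ring.
replace (1 * (y - x) + x) with y in E by ring.
rewrite <- E. clear E.
rewrite J_RInt.
assert (E2 := RInt_scal (V:=R_CompleteNormedModule) gauss 0 (y-x) (exp (-x^2)) (ex_RInt_gauss _ _)).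
change (scal (exp (-x^2)) (RInt gauss 0 (y-x))) with (exp (-x^2) * RInt gauss 0 (y-x)) in E2.
rewrite <- E2. clear E2.
apply RInt_le.
- lra.
- apply (@ex_RInt_continuous R_CompleteNormedModule). intros.
  apply (continuous_scal (fun _ => 1) (fun t => gauss (1 * t + x))). apply continuous_const.
  apply (continuous_comp (fun t => 1 * t + x) gauss).
  apply (continuous_plus (fun t => 1 * t) (fun _ => x)).
  apply (continuous_mult (fun _ => 1) (fun t => t)). apply continuous_const. apply continuous_id.
  apply continuous_const. apply gauss_cont.
- apply ex_RInt_gauss_scal.
- intros t Ht. unfold scal; simpl; unfold mult; simpl. rewrite Rmult_1_l.
  unfold gauss. rewrite <- exp_plus. apply exp_le'.
  replace (1 * t + x) with (t + x) by ring. nra.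
Qed.

Definition L := sqrt PI / 2.
Lemma L_pos : 0 < L.
Proof. unfold L. generalize (sqrt_lt_R0 PI PI_RGT_0). lra. Qed.
Lemma L_sq : L ^ 2 = PI / 4.
Proof. unfold L. assert (H := sqrt_sqrt PI (Rlt_le _ _ PI_RGT_0)). field_simplify. rewrite pow2_sqrt; [lra|]. generalize PI_RGT_0; lra. Qed.

Lemma J_le_L x : J x <= L.
Proof.
destruct (Rle_or_lt (J x) L) as [H|H]; auto. exfalso.
assert (Lp := L_pos). assert (Ls := L_sq).
set (d := J x ^ 2 - PI / 4).
assert (dpos : 0 < d). { unfold d. rewrite <- Ls. nra. }
destruct (MC.Jsq_lim' d dpos) as [M HM].
set (y := Rmax M x + 1).
assert (My : M < y) by (unfold y; generalize (Rmax_l M x); lra).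
assert (xy : x <= y) by (unfold y; generalize (Rmax_r M x); lra).
specialize (HM y My). assert (Jm := J_mono x y xy).
assert (J y ^ 2 >= J x ^ 2) by nra.
rewrite Rabs_right in HM; unfold d in *; lra.
Qed.

Lemma J_gap x : 0 <= x -> L - J x <= exp (- x ^ 2) * L.
Proof.
intros Hx.
destruct (Rle_or_lt (L - J x) (exp (- x ^ 2) * L)) as [H|H]; auto. exfalso.
assert (Lp := L_pos). assert (Ls := L_sq).
set (dl := L - J x - exp (- x ^ 2) * L).
assert (dpos : 0 < dl) by (unfold dl; lra).
destruct (MC.Jsq_lim' (dl * L) ltac:(nra)) as [M HM].
set (y := Rmax M x + 1).
assert (My : M < y) by (unfold y; generalize (Rmax_l M x); lra).
assert (xy : x <= y) by (unfold y; generalize (Rmax_r M x); lra).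
specialize (HM y My).
assert (T := J_tail x y Hx xy).
assert (T2 := J_le_L (y - x)).
assert (E := exp_pos (- x ^ 2)).
assert (T3 : exp (- x ^ 2) * J (y - x) <= exp (- x ^ 2) * L) by nra.
assert (Jy0 : 0 <= J y) by (apply J_ge0; lra).
assert (Jy : J y <= L - dl) by (unfold dl in *; lra).
assert (dL : dl <= L) by lra.
assert (J y ^ 2 <= (L - dl) ^ 2) by nra.
assert (PI / 4 - J y ^ 2 >= dl * L) by nra.
assert (0 < dl * L) by nra. rewrite Rabs_left1 in HM; lra.
Qed.

Lemma J_lt_L x : J x < L.
Proof.
assert (H := J_le_L (x + 1)). assert (H2 := RInt_gauss_gt0 x (x + 1) ltac:(lra)).
rewrite <- J_diff in H2. lra.
Qed.

Lemma erfc_pos x : 0 < erfc x.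
Proof.
unfold erfc, erf. fold (J x). assert (H := J_lt_L x). unfold L in H.
assert (S := sqrt_lt_R0 PI PI_RGT_0).
assert (2 / sqrt PI * J x < 1); [| lra].
apply (Rmult_lt_reg_l (sqrt PI / 2)). lra.
replace (sqrt PI / 2 * (2 / sqrt PI * J x)) with (J x) by (field; lra). lra.
Qed.

Lemma erfc_le x : 0 <= x -> erfc x <= exp (- x ^ 2).
Proof.
intros Hx. unfold erfc, erf. fold (J x). assert (H := J_gap x Hx). unfold L in H.
assert (S := sqrt_lt_R0 PI PI_RGT_0).
apply (Rmult_le_reg_l (sqrt PI / 2)). lra.
replace (sqrt PI / 2 * (1 - 2 / sqrt PI * J x)) with (sqrt PI / 2 - J x) by (field; lra). lra.
Qed.

Lemma erf_pos x : 0 < x -> 0 < erf x.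
Proof.
intros. unfold erf. fold (J x). assert (S := sqrt_lt_R0 PI PI_RGT_0).
assert (0 < J x). { assert (H2 := RInt_gauss_gt0 0 x H). rewrite <- J_diff, J0 in H2. lra. }
apply Rmult_lt_0_compat; auto. apply Rdiv_lt_0_compat; lra.
Qed.

Theorem corollary5 (rho c_s c_l k_s k_l l T0 Tf Ti xi : R)
  (Hrho : 0 < rho) (Hcs : 0 < c_s) (Hcl : 0 < c_l)
  (Hks : 0 < k_s) (Hkl : 0 < k_l) (Hl : 0 < l)
  (H0f : T0 < Tf) (Hfi : Tf < Ti)
  (Hxi : 0 < xi) (HG : Gfun rho c_s c_l k_s k_l l T0 Tf Ti xi = xi) :
  erf (xi * sqrt (alpha_l rho c_l k_l / alpha_s rho c_s k_s))
  < k_s / k_l * sqrt (alpha_l rho c_l k_l / alpha_s rho c_s k_s)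
      * ((Tf - T0) / (Ti - Tf)).
Proof.
unfold Gfun, F1, F2 in HG. cbv zeta in HG.
set (a_s := alpha_s rho c_s k_s) in *.
set (a_l := alpha_l rho c_l k_l) in *.
assert (Has : 0 < a_s) by (unfold a_s, alpha_s; apply Rdiv_lt_0_compat; nra).
assert (Hal : 0 < a_l) by (unfold a_l, alpha_l; apply Rdiv_lt_0_compat; nra).
assert (Kl : k_l = a_l * (rho * c_l)) by (unfold a_l, alpha_l; field; nra).
set (qs := sqrt a_s). set (ql := sqrt a_l).
assert (Hqs : 0 < qs) by (apply sqrt_lt_R0; auto).
assert (Hql : 0 < ql) by (apply sqrt_lt_R0; auto).
assert (Eal : a_l = ql * ql) by (unfold ql; rewrite sqrt_sqrt; lra).
assert (Sb : sqrt (a_l / a_s) = ql / qs) by (unfold ql, qs; apply sqrt_div; lra).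
assert (SP := sqrt_lt_R0 PI PI_RGT_0).
assert (Spi : sqrt (PI * a_s * a_l) = sqrt PI * qs * ql).
{ unfold qs, ql. assert (PP := PI_RGT_0). rewrite (sqrt_mult (PI * a_s) a_l) by nra. rewrite (sqrt_mult PI a_s) by lra. reflexivity. }
rewrite Sb in HG |- *. rewrite Spi in HG.
set (yv := xi * (ql / qs)) in *.
assert (Hyv : 0 < yv) by (unfold yv; apply Rmult_lt_0_compat; auto; apply Rdiv_lt_0_compat; auto).
replace (ql / qs * xi) with yv in HG by (unfold yv; ring).
assert (Ey := erf_pos yv Hyv).
assert (Ec := erfc_pos xi). assert (Ec2 := erfc_le xi (Rlt_le _ _ Hxi)).
assert (Ex := exp_pos (- xi ^ 2)). assert (Ey2 := exp_pos (- yv ^ 2)).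
assert (Ey3 : exp (- yv ^ 2) <= 1) by (rewrite <- exp_0; apply exp_le'; nra).
set (b3 := c_l * (Ti - Tf) / (l * sqrt PI)) in *.
set (b4 := k_s * (Tf - T0) / (rho * l * (sqrt PI * qs * ql))) in *.
assert (Hb3 : 0 < b3) by (unfold b3; apply Rdiv_lt_0_compat; nra).
assert (Hb4 : 0 < b4) by (unfold b4; apply Rdiv_lt_0_compat; [nra|]; repeat apply Rmult_lt_0_compat; auto).
assert (F1ge : 1 <= exp (- xi ^ 2) / erfc xi).
{ apply (Rmult_le_reg_r (erfc xi)); auto. unfold Rdiv. rewrite Rmult_assoc, Rinv_l; lra. }
assert (F2le : exp (- yv ^ 2) / erf yv <= 1 / erf yv).
{ unfold Rdiv. apply Rmult_le_compat_r; auto. left; apply Rinv_0_lt_compat; auto. }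
assert (Key : b3 < b4 / erf yv).
{ assert (b3 <= b3 * (exp (- xi ^ 2) / erfc xi)) by nra.
  assert (b4 * (exp (- yv ^ 2) / erf yv) <= b4 * (1 / erf yv)) by nra.
  unfold Rdiv at 1 in H0. unfold Rdiv. lra. }
assert (Key2 : erf yv < b4 / b3).
{ apply (Rmult_lt_reg_r (b3 / erf yv)). apply Rdiv_lt_0_compat; auto.
  replace (erf yv * (b3 / erf yv)) with b3 by (field; lra).
  replace (b4 / b3 * (b3 / erf yv)) with (b4 / erf yv) by (field; lra). auto. }
eapply Rlt_le_trans; [exact Key2|]. right.
unfold b4, b3. rewrite Kl, Eal. field.
repeat split; try lra; try nra.
Qed.
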